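(* Let $M=(S,\mathrm{Act},P)$ be an MDP and $T\subseteq S$. Let $(x,r,\sigma)$ with $x\in[0,1]^S$, $r\in\mathbb{N}_\infty^S$ and $\sigma$ a strategy satisfy: (1) $D^{\sigma}(r)\le r$; (2) $x\le B^{\sigma}(x)$; (3) for all $s\in S\setminus T$, $x(s)>0$ implies $r(s)<\infty$ (inequalities pointwise). Then for all $s\in S$: $\Pr^{\max}_s(\Diamond T)\ge\Pr^{\sigma}_s(\Diamond T)\ge x(s)$.
   Context: An MDP is a tuple $M=(S,\mathrm{Act},P)$ with $S$ finite, $\mathrm{Act}$ finite, $P\colon S\times\mathrm{Act}\times S\to[0,1]$ with $\sum_{s'}P(s,a,s')\in\{0,1\}$; $\mathrm{Act}(s)=\{a\mid\sum_{s'}P(s,a,s')=1\}$ is nonempty for all $s$; $\mathrm{Post}(s,a)=\{s'\mid P(s,a,s')>0\}$. A strategy is $\sigma\colon S\to\mathrm{Act}$ with $\sigma(s)\in\mathrm{Act}(s)$, inducing a Markov chain with transitions $P(s,\sigma(s),\cdot)$; $\Pr^\sigma_s(\Diamond T)$ is the probability of visiting $T$ from $s$ and $\Pr^{\max}_s(\Diamond T)=\max_\sigma\Pr^\sigma_s(\Diamond T)$. $\mathbb{N}_\infty=\mathbb{N}\cup\{\infty\}$, $1+\infty=\infty$. $D^{\sigma}(r)(s)=0$ for $s\in T$ and $1+\min_{s'\in\mathrm{Post}(s,\sigma(s))}r(s')$ for $s\notin T$. $B^{\sigma}(x)(s)=1$ for $s\in T$ and $\sum_{s'\in\mathrm{Post}(s,\sigma(s))}P(s,\sigma(s),s')x(s')$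 for $s\notin T$. *)

(* Defs.v *)
From HB Require Import structures.
From mathcomp Require Import all_boot all_order all_algebra.
From mathcomp Require Import boolp classical_sets reals.
Set Implicit Arguments. Unset Strict Implicit. Unset Printing Implicit Defensive.
Import Order.TTheory GRing.Theory Num.Theory.
Local Open Scope ring_scope.

Section MDP.
Variables (R : realType) (S Act : finType) (P : S -> Act -> S -> R).

Definition is_MDP : Prop :=
  (forall s a s', 0 <= P s a s' <= 1) /\
  (forall s a, (\sum_(s' : S) P s a s' == 0) || (\sum_(s' : S) P s a s' == 1)) /\
  (forall s, exists a : Act, \sum_(s' : S) P s a s' = 1).

(* sigma(s) in Act(s) for every s *)
Definition strategyb (sigma : S -> Act) : bool :=
  [forall s, \sum_(s' : S) P s (sigma s) s' == 1].

Definition Post (s : S) (a : Act) : pred S := fun s' => 0 < P s a s'.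

Variable T : {set S}.

Fixpoint reach_within (sigma : S -> Act) (n : nat) (s : S) : R :=
  match n with
  | 0 => if s \in T then 1 else 0
  | n.+1 => if s \in T then 1
            else \sum_(s' : S) P s (sigma s) s' * reach_within sigma n s'
  end.

(* Pr^sigma_s(<> T) = sup_n Pr^sigma_s(<>^{<= n} T) (union of increasing events) *)
Definition Pr_reach (sigma : S -> Act) (s : S) : R :=
  sup [set reach_within sigma n s | n in [set: nat]].

(* Pr^max_s(<> T) = max over (memoryless) strategies *)
Definition Pr_max_reach (s : S) : R :=
  \big[Num.max/0]_(sigma : {ffun S -> Act} | strategyb sigma) Pr_reach sigma s.

(* N_infinity = option nat, None = infinity *)
Definition ninf := option nat.
Definition ninf_le (a b : ninf) : bool :=
  match b, a with
  | None, _ => true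
  | Some _, None => false
  | Some m, Some n => (n <= m)%N
  end.
Definition ninf_min (a b : ninf) : ninf :=
  match a, b with
  | None, _ => b
  | _, None => a
  | Some n, Some m => Some (minn n m)
  end.
Definition ninf_succ (a : ninf) : ninf := omap succn a.

Definition Dop (sigma : S -> Act) (r : S -> ninf) (s : S) : ninf :=
  if s \in T then Some 0%N
  else ninf_succ (\big[ninf_min/None]_(s' | Post s (sigma s) s') r s').

Definition Bop (sigma : S -> Act) (x : S -> R) (s : S) : R :=
  if s \in T then 1
  else \sum_(s' | Post s (sigma s) s') P s (sigma s) s' * x s'.

End MDP.

(* Main.v *)
Require Import Defs.
From HB Require Import structures.
From mathcomp Require Import all_boot all_order all_algebra.
From mathcomp Require Import boolp classical_sets reals.
Import Order.TTheory GRing.Theory Num.Theory.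
Local Open Scope ring_scope.

Section Aux.
Variables (R : realType) (S Act : finType) (P : S -> Act -> S -> R) (T : {set S}).
Hypothesis HP : is_MDP P.
Variable sigma : S -> Act.
Hypothesis Hs : strategyb P sigma.

Lemma P_ge0 s a s' : 0 <= P s a s'.
Proof. by case: HP => /(_ s a s') /andP[]. Qed.

Lemma sumP1 s : \sum_s' P s (sigma s) s' = 1.
Proof. by move/forallP: Hs => /(_ s) /eqP. Qed.

Lemma sum_post s a (f : S -> R) :
  \sum_(s' | Post P s a s') P s a s' * f s' = \sum_s' P s a s' * f s'.
Proof.
rewrite big_mkcond; apply: eq_bigr => i _; case: ifP => //.
rewrite /Post => /negbT; rewrite -leNgt => H.
have -> : P s a i = 0 by apply/eqP; rewrite eq_le H P_ge0.
by rewrite mul0r.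
Qed.

Lemma reach_bnd n s : 0 <= reach_within P T sigma n s <= 1.
Proof.
elim: n s => [|n IH] s /=; first by case: ifP; rewrite ?ler01 ?lexx.
case: ifP => _; first by rewrite ler01 lexx.
apply/andP; split.
  by apply: sumr_ge0 => i _; apply: mulr_ge0; rewrite ?P_ge0 //; case/andP: (IH i).
rewrite -(sumP1 s); apply: ler_sum => i _.
by rewrite ler_piMr ?P_ge0 //; case/andP: (IH i).
Qed.

Lemma reach_mono1 n s : reach_within P T sigma n s <= reach_within P T sigma n.+1 s.
Proof.
elim: n s => [|n IH] s /=.
  case: ifP => _ //; apply: sumr_ge0 => i _; apply: mulr_ge0; rewrite ?P_ge0 //.
  by case: ifP; rewrite ?ler01.
case: ifP => _ //; apply: ler_sum => i _; by rewrite ler_wpM2l ?P_ge0.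
Qed.

Lemma reach_mono n k s : reach_within P T sigma n s <= reach_within P T sigma (n + k) s.
Proof.
elim: k => [|k IH]; first by rewrite addn0.
by apply: le_trans IH _; rewrite addnS reach_mono1.
Qed.

Let E s := [set reach_within P T sigma n s | n in [set: nat]]%classic.

Lemma hasE s : has_sup (E s).
Proof.
split; first by exists (reach_within P T sigma 0 s), 0%N.
exists 1 => _ [n _ <-]; by case/andP: (reach_bnd n s).
Qed.

Lemma reach_le_Pr n s : reach_within P T sigma n s <= Pr_reach P T sigma s.
Proof. by apply: (sup_upper_bound (hasE s)); exists n. Qed.

Lemma Pr_le1 s : Pr_reach P T sigma s <= 1.
Proof.
apply: ge_sup; first by exists (reach_within P T sigma 0 s), 0%N.
by move=> _ [n _ <-]; case/andP: (reach_bnd n s).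
Qed.

Lemma Pr_T s : s \in T -> Pr_reach P T sigma s = 1.
Proof.
move=> sT; apply/eqP; rewrite eq_le Pr_le1.
by apply: le_trans (reach_le_Pr 0 s); rewrite /= sT.
Qed.

Lemma B_Pr s : s \notin T ->
  \sum_s' P s (sigma s) s' * Pr_reach P T sigma s' <= Pr_reach P T sigma s.
Proof.
move=> sT; apply/ler_addgt0Pr => e e0.
have H : forall s', exists n, Pr_reach P T sigma s' - e < reach_within P T sigma n s'.
  move=> s'; have [_ [n _ <-] Hn] := sup_adherent e0 (hasE s'); by exists n.
pose N := (\max_(s' : S) xchoose (H s'))%N.
have HN s' : Pr_reach P T sigma s' - e <= reach_within P T sigma N s'.
  have le : (xchoose (H s') <= N)%N by apply: (leq_bigmax s').
  apply: le_trans (ltW (xchooseP (H s'))) _.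
  by rewrite -(subnKC le) reach_mono.
apply: le_trans (_ : reach_within P T sigma N.+1 s + e <= _); last first.
  by rewrite lerD2r reach_le_Pr.
rewrite /= (negbTE sT).
have -> : e = \sum_s' P s (sigma s) s' * e by rewrite -mulr_suml sumP1 mul1r.
rewrite -big_split /=; apply: ler_sum => i _.
by rewrite -mulrDr ler_wpM2l ?P_ge0 // -lerBlDr HN.
Qed.

End Aux.

Lemma bigmin_some (S : finType) (Q : pred S) (F : S -> ninf) j :
  \big[ninf_min/None]_(i | Q i) F i = Some j -> exists i, Q i /\ F i = Some j.
Proof.
elim/big_rec: _ j => // i acc Qi IH j.
case Fi: (F i) => [a|]; case: acc IH => [b|] IH //=.
- case/orP: (leq_total a b) => ab.
    by rewrite (minn_idPl ab) => -[<-]; exists i.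
  by rewrite (minn_idPr ab) => Hb; apply: IH.
- by move=> -[<-]; exists i.
- by move=> Hb; apply: IH.
Qed.

Theorem proposition5 (R : realType) (S Act : finType) (P : S -> Act -> S -> R)
  (T : {set S}) (x : S -> R) (r : S -> ninf) (sigma : S -> Act) :
  is_MDP P ->
  strategyb P sigma ->
  (forall s, 0 <= x s <= 1) ->
  (forall s, ninf_le (Dop P T sigma r s) (r s)) ->
  (forall s, x s <= Bop P T sigma x s) ->
  (forall s, s \notin T -> 0 < x s -> r s != None) ->
  forall s, Pr_max_reach P T s >= Pr_reach P T sigma s /\ Pr_reach P T sigma s >= x s.
Proof.
move=> HP Hs Hx Hr HB Hfin s0; split.
  pose f : {ffun S -> Act} := [ffun s => sigma s].
  have fs : strategyb P f.
    by apply/forallP => s; rewrite ffunE; move/forallP: Hs => /(_ s).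
  have eqr n s : reach_within P T f n s = reach_within P T sigma n s.
    elim: n s => [|n IH] s //=; case: ifP => // _.
    by apply: eq_bigr => i _; rewrite ffunE IH.
  have -> : Pr_reach P T sigma s0 = Pr_reach P T f s0.
    by rewrite /Pr_reach; congr sup; apply/funext => v; apply/propext;
      split => -[n _ <-]; exists n => //.
  rewrite /Pr_max_reach; exact: (@le_bigmax_cond _ _ _ _ _ _ (fun g : {ffun S -> Act} => Pr_reach P T g s0) fs).
pose y := Pr_reach P T sigma.
pose d s := x s - y s.
pose smax := [arg max_(i > s0) d i]%O.
have dmax s : d s <= d smax.
  by rewrite /smax; case: arg_maxP => // i _ H; apply: H.
suff H : d smax <= 0 by have := le_trans (dmax s0) H; rewrite /d subr_le0.
rewrite leNgt; apply/negP => m0.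
have dT s : s \in T -> d s <= 0.
  by move=> sT; rewrite /d /y Pr_T // subr_le0; case/andP: (Hx s).
pose rn s := odflt 0%N (r s).
pose sm := [arg min_(i < smax | d i == d smax) rn i]%O.
have [dsm minsm] : d sm = d smax /\ forall i, d i == d smax -> (rn sm <= rn i)%N.
  by rewrite /sm; case: arg_minP => // i /eqP -> H; split.
have smT : sm \notin T by apply/negP => /dT; rewrite dsm leNgt m0.
have xsm : 0 < x sm.
  have := m0; rewrite -dsm /d subr_gt0; apply: le_lt_trans.
  by apply: le_trans (@reach_le_Pr _ _ _ P T HP sigma Hs 0 sm); case/andP: (@reach_bnd _ _ _ P T HP sigma Hs 0 sm).
have := Hfin sm smT xsm; case rsm: (r sm) => [k|] // _.
have := Hr sm; rewrite /Dop (negbTE smT) rsm.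
case bm: (\big[ninf_min/None]_(s' | Post P sm (sigma sm) s') r s') => [j|] //= jk.
have [s' [Ps' rs']] := @bigmin_some _ _ _ _ bm.
have key : d sm <= \sum_i P sm (sigma sm) i * d i.
  rewrite /d; under eq_bigr do rewrite mulrBr; rewrite sumrB.
  apply: lerB.
    by have := HB sm; rewrite /Bop (negbTE smT) sum_post.
  exact: B_Pr.
have ds' : d s' = d smax.
  apply/eqP; rewrite eq_le dmax /=; rewrite leNgt; apply/negP => lt.
  have : 0 < \sum_i P sm (sigma sm) i * (d smax - d i).
    rewrite (bigD1 s') //=; apply: ltr_pwDl.
      by apply: mulr_gt0; rewrite // subr_gt0.
    by apply: sumr_ge0 => i _; apply: mulr_ge0; rewrite ?P_ge0 // subr_ge0.
  under eq_bigr do rewrite mulrBr; rewrite sumrB -mulr_suml (@sumP1 _ _ _ P sigma Hs) mul1r.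
  by rewrite subr_gt0 ltNge -dsm key.
have := minsm s' (introT eqP ds'); rewrite /rn rsm rs' /=.
by move=> H; move: (leq_trans jk H); rewrite ltnn.
Qed.
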